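(* Let $R$ be a Noetherian ring and $\phi$ an $m\times s$ matrix with entries in $R$. Suppose $I_1(\phi)\subseteq(a_1,\dots,a_r)$ and $a_1,\dots,a_r$ is an $R$-regular sequence. Then for every $i\ge1$, the ideal $\mathcal L+I_r(B_i(\phi))$ of $R[T_1,\dots,T_m]$ does not depend on the choices made in the construction of the $i$-th iterated Jacobian dual $B_i(\phi)$; i.e., it is uniquely determined by $\phi$ and $a_1,\dots,a_r$.
   Context: Grade $R[T_1,\dots,T_m]$ by $\deg T_j=1$, $\deg R=0$. $\mathcal L$ is the ideal generated by the entries of $[T_1\cdots T_m]\cdot\phi$. For a matrix $M$ with $r$ rows, $(\underline a\cdot M)$ denotes the ideal generated by the entries of $[a_1\cdots a_r]\cdot M$, and $I_r(M)$ its ideal of $r\times r$ minors. Iterated Jacobian duals: $B_1(\phi)$ is any $r\times s$ matrix with entries linear forms in $T_1,\dots,T_m$ with coefficients in $R$ such that $[T_1\cdots T_m]\cdot\phi=[a_1\cdots a_r]\cdot B_1(\phi)$; set $\mathcal L_1=\mathcal L$. Given $B_{i-1}(\phi)$ (with $r$ rows, entries homogeneous of constant degree along each column) and $\mathcal L_{i-1}=(\underline a\cdot B_{i-1}(\phi))$, choose homogeneous $u_1,\dots,u_l$ with $\mathcal L_{i-1}+(I_r(B_{i-1}(\phi))\cap(a_1,\dots,a_r))=\mathcal L_{i-1}+(u_1,\dots,u_l)$, choose a matrix $C$ with homogeneous entries of constant degree along each column with $[u_1\cdots u_l]=[a_1\cdots a_r]\cdot C$, and set $B_i(\phi)=[B_{i-1}(\phi)\,|\,C]$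 (concatenation) and $\mathcal L_i=(\underline a\cdot B_i(\phi))$. *)

(* Defs.v *)
From HB Require Import structures.
From mathcomp Require Import all_boot all_order all_algebra.
From mathcomp Require Import mpoly.
Set Implicit Arguments. Unset Strict Implicit. Unset Printing Implicit Defensive.
Import Order.TTheory GRing.Theory.
Local Open Scope ring_scope.

Definition is_ideal (A : comNzRingType) (I : A -> Prop) : Prop :=
  [/\ I 0, (forall x y, I x -> I y -> I (x + y)) & (forall c x, I x -> I (c * x))].

Definition ideal_span (A : comNzRingType) (G : A -> Prop) : A -> Prop :=
  fun x => exists (s c : seq A),
    [/\ (forall g, g \in s -> G g), size c = size s &
        x = \sum_(i < size s) c`_i * s`_i].

Definition ideal_add (A : comNzRingType) (I J : A -> Prop) : A -> Prop :=
  ideal_span (fun x => I x \/ J x).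

Definition ideal_cap (A : comNzRingType) (I J : A -> Prop) : A -> Prop :=
  fun x => I x /\ J x.

Definition ideal_eq (A : comNzRingType) (I J : A -> Prop) : Prop :=
  forall x, I x <-> J x.

Definition entries_ideal (A : comNzRingType) p q (M : 'M[A]_(p, q)) : A -> Prop :=
  ideal_span (fun x => exists i j, x = M i j).

Definition row_ideal (A : comNzRingType) r q (a : 'rV[A]_r) (M : 'M[A]_(r, q))
  : A -> Prop := entries_ideal (a *m M).

Definition minors_ideal (A : comNzRingType) r q (M : 'M[A]_(r, q)) : A -> Prop :=
  ideal_span (fun x => exists f : 'I_r -> 'I_q,
                 (forall i j : 'I_r, (i < j)%N -> (f i < f j)%N) /\
                 x = \det (colsub f M)).

Definition noetherian (A : comNzRingType) : Prop :=
  forall I : A -> Prop, is_ideal I ->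
    exists s : seq A, ideal_eq I (ideal_span (fun x => x \in s)).

Definition regular_seq (A : comNzRingType) r (a : 'rV[A]_r) : Prop :=
  ~ ideal_span (fun x => exists j, x = a 0 j) 1 /\
  forall i : 'I_r, forall x : A,
    ideal_span (fun y => exists2 j : 'I_r, (j < i)%N & y = a 0 j) (a 0 i * x) ->
    ideal_span (fun y => exists2 j : 'I_r, (j < i)%N & y = a 0 j) x.

Section JacobianDual.
Variables (R : comNzRingType) (m s r : nat).
Variable (phi : 'M[R]_(m, s)) (a : 'rV[R]_r).

Local Notation S := {mpoly R[m]}.

Definition Tvars : 'rV[S]_m := \row_(i < m) 'X_i.
Definition phiS : 'M[S]_(m, s) := map_mx (fun c => c%:MP) phi.
Definition aS : 'rV[S]_r := map_mx (fun c => c%:MP) a.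

Definition Lideal : S -> Prop := entries_ideal (Tvars *m phiS).

Definition aIdealS : S -> Prop := ideal_span (fun x => exists j, x = aS 0 j).

Definition col_homog p q (M : 'M[S]_(p, q)) : Prop :=
  exists d : 'I_q -> nat, forall i j, M i j \is (d j).-homog.

(* iterated_jdual i k B  <->  B : r x k is a possible i-th iterated Jacobian
   dual B_i(phi) (for some admissible sequence of choices). *)
Inductive iterated_jdual : nat -> forall k : nat, 'M[S]_(r, k) -> Prop :=
| ijd_one (B : 'M[S]_(r, s)) :
    (forall i j, B i j \is 1.-homog) ->
    Tvars *m phiS = aS *m B ->
    iterated_jdual 1 B
| ijd_step (n k l : nat) (B : 'M[S]_(r, k)) (u : 'rV[S]_l) (C : 'M[S]_(r, l)) :
    iterated_jdual n B ->
    col_homog B ->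
    (forall j, exists d, u 0 j \is d.-homog) ->
    ideal_eq (ideal_add (row_ideal aS B) (ideal_cap (minors_ideal B) aIdealS))
             (ideal_add (row_ideal aS B) (entries_ideal u)) ->
    col_homog C ->
    u = aS *m C ->
    iterated_jdual n.+1 (row_mx B C).

End JacobianDual.

(* Main.v *)
Require Import Defs.
From HB Require Import structures.
From mathcomp Require Import all_boot all_order all_fingroup all_algebra.
From mathcomp Require Import mpoly.
From mathcomp Require Import ring.
From Stdlib Require Import IndefiniteDescription.
Set Implicit Arguments. Unset Strict Implicit. Unset Printing Implicit Defensive.
Import Order.TTheory GRing.Theory.
Local Open Scope ring_scope.

Section Ideals.
Variable A : comNzRingType.
Implicit Types (G H : A -> Prop) (I J : A -> Prop).

Lemma span_ideal G : is_ideal (ideal_span G).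
Proof.
split.
- by exists [::], [::]; split => //; rewrite big_ord0.
- move=> x y [s1 [c1 [H1 E1 ->]]] [s2 [c2 [H2 E2 ->]]].
  exists (s1 ++ s2), (c1 ++ c2); split.
  + by move=> g; rewrite mem_cat => /orP [] ?; [apply: H1|apply: H2].
  + by rewrite !size_cat E1 E2.
  + rewrite size_cat big_split_ord /=; congr (_ + _); apply: eq_bigr => i _.
    * by rewrite !nth_cat /= E1 ltn_ord.
    * by rewrite !nth_cat /= E1 ltnNge leq_addr /= addKn.
- move=> c x [s1 [c1 [H1 E1 ->]]].
  exists s1, [seq c * y | y <- c1]; split => //; first by rewrite size_map.
  rewrite mulr_sumr; apply: eq_bigr => i _.
  by rewrite (nth_map 0) ?E1 // mulrA.
Qed.

Lemma span_gen G x : G x -> ideal_span G x.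
Proof.
move=> Gx; exists [:: x], [:: 1]; split => //.
  by move=> g; rewrite inE => /eqP ->.
by rewrite big_ord1 mul1r.
Qed.

Lemma id0 I : is_ideal I -> I 0.
Proof. by case. Qed.
Lemma idD I x y : is_ideal I -> I x -> I y -> I (x + y).
Proof. by case=> _ H _; apply: H. Qed.
Lemma idM I c x : is_ideal I -> I x -> I (c * x).
Proof. by case=> _ _ H; apply: H. Qed.
Lemma idMr I c x : is_ideal I -> I x -> I (x * c).
Proof. by move=> iI Ix; rewrite mulrC; apply: idM. Qed.
Lemma idN I x : is_ideal I -> I x -> I (- x).
Proof. by move=> iI Ix; rewrite -mulN1r; apply: idM. Qed.
Lemma idB I x y : is_ideal I -> I x -> I y -> I (x - y).
Proof. by move=> iI Ix Iy; apply: idD => //; apply: idN. Qed.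
Lemma id_sum I (T : Type) (s : seq T) (P : pred T) F :
  is_ideal I -> (forall i, P i -> I (F i)) -> I (\sum_(i <- s | P i) F i).
Proof.
move=> iI H; elim/big_rec: _ => [|i x Pi Ix]; first exact: id0.
by apply: idD => //; apply: H.
Qed.

Lemma span_min G I : is_ideal I -> (forall x, G x -> I x) ->
  forall x, ideal_span G x -> I x.
Proof.
move=> iI GI x [s [c [Hs Hc ->]]]; apply: id_sum => // i _.
apply: idM => //; apply: GI; apply: Hs; exact: mem_nth.
Qed.

Lemma span_mono G H : (forall x, G x -> H x) ->
  forall x, ideal_span G x -> ideal_span H x.
Proof.
move=> GH; apply: span_min; first exact: span_ideal.
by move=> x Gx; apply: span_gen; apply: GH.
Qed.

Lemma span_sub G I : is_ideal I -> (forall x, G x -> I x) ->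
  forall x, ideal_span G x -> I x.
Proof. exact: span_min. Qed.

Lemma add_ideal I J : is_ideal (ideal_add I J).
Proof. exact: span_ideal. Qed.
Lemma iaddl I J x : I x -> ideal_add I J x.
Proof. by move=> Ix; apply: span_gen; left. Qed.
Lemma iaddr I J x : J x -> ideal_add I J x.
Proof. by move=> Ix; apply: span_gen; right. Qed.

Lemma span_nat (g : nat -> A) n x :
  ideal_span (fun y => exists2 j, (j < n)%N & y = g j) x <->
  exists c : nat -> A, x = \sum_(j < n) c j * g j.
Proof.
split.
- apply: (span_min (I := fun x => exists c : nat -> A, x = \sum_(j < n) c j * g j)).
  + split.
    * by exists (fun _ => 0); rewrite big1 // => j _; rewrite mul0r.
    * move=> x1 y1 [c1 ->] [c2 ->]; exists (fun j => c1 j + c2 j).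
      by rewrite -big_split; apply: eq_bigr => j _; rewrite mulrDl.
    * move=> c x1 [c1 ->]; exists (fun j => c * c1 j).
      by rewrite mulr_sumr; apply: eq_bigr => j _; rewrite mulrA.
  + move=> y [j jn ->]; exists (fun i => (i == j)%:R).
    rewrite (bigD1 (Ordinal jn)) //= eqxx mul1r big1 ?addr0 // => i.
    by rewrite -val_eqE /= => /negPf ->; rewrite mul0r.
- move=> [c ->]; apply: id_sum; first exact: span_ideal.
  move=> j _; apply: idM; first exact: span_ideal.
  by apply: span_gen; exists j.
Qed.

Lemma span_ord k (g : 'I_k -> A) x :
  ideal_span (fun y => exists j, y = g j) x <->
  exists c : 'I_k -> A, x = \sum_j c j * g j.
Proof.
split.
- apply: (span_min (I := fun x => exists c : 'I_k -> A, x = \sum_j c j * g j)).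
  + split.
    * by exists (fun _ => 0); rewrite big1 // => j _; rewrite mul0r.
    * move=> x1 y1 [c1 ->] [c2 ->]; exists (fun j => c1 j + c2 j).
      by rewrite -big_split; apply: eq_bigr => j _; rewrite mulrDl.
    * move=> c x1 [c1 ->]; exists (fun j => c * c1 j).
      by rewrite mulr_sumr; apply: eq_bigr => j _; rewrite mulrA.
  + move=> y [j ->]; exists (fun i => (i == j)%:R).
    rewrite (bigD1 j) //= eqxx mul1r big1 ?addr0 // => i /negPf ->.
    by rewrite mul0r.
- move=> [c ->]; apply: id_sum; first exact: span_ideal.
  move=> j _; apply: idM; first exact: span_ideal.
  by apply: span_gen; exists j.
Qed.

Lemma entries_row k (M : 'rV[A]_k) x :
  entries_ideal M x <-> ideal_span (fun y => exists j, y = M 0 j) x.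
Proof.
split; apply: span_mono.
- by move=> y [i [j ->]]; exists j; rewrite (ord1 i).
- by move=> y [j ->]; exists 0, j.
Qed.

End Ideals.


Section Det.
Variable A : comNzRingType.
Variable r : nat.
Variable a : 'rV[A]_r.

Definition setcol (X : 'M[A]_r) (c : 'I_r) (v : 'cV[A]_r) : 'M[A]_r :=
  \matrix_(i, j) if j == c then v i 0 else X i j.

Definition ev (q : 'I_r) : 'cV[A]_r := \col_i (i == q)%:R.

Lemma col'_setcol X c v : col' c (setcol X c v) = col' c X.
Proof.
by apply/matrixP => i j; rewrite !mxE eq_sym (negPf (neq_lift c j)).
Qed.

Lemma cofactor_setcol X c v i : cofactor (setcol X c v) i c = cofactor X i c.
Proof. by rewrite /cofactor col'_setcol. Qed.

Lemma det_setcol X c v : \det (setcol X c v) = \sum_i v i 0 * cofactor X i c.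
Proof.
rewrite (expand_det_col _ c); apply: eq_bigr => i _.
by rewrite cofactor_setcol mxE eqxx.
Qed.

Lemma setcolK X c v w : setcol (setcol X c v) c w = setcol X c w.
Proof. by apply/matrixP => i j; rewrite !mxE; case: eqP. Qed.

Lemma identC (Y : 'M[A]_r) v :
  (a *m v) 0 0 * \det Y = \sum_j (a *m Y) 0 j * \det (setcol Y j v).
Proof.
have E j : \det (setcol Y j v) = (\adj Y *m v) j 0.
  rewrite det_setcol mxE; apply: eq_bigr => i _; by rewrite mxE mulrC.
under eq_bigr do rewrite E.
transitivity (((a *m Y) *m (\adj Y *m v)) 0 0); last by rewrite mxE.
rewrite mulmxA -(mulmxA a) mul_mx_adj mul_mx_scalar -scalemxAl [RHS]mxE.
by rewrite mulrC.
Qed.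

Lemma det_setcol_ev X c p : \det (setcol X c (ev p)) = cofactor X p c.
Proof.
rewrite det_setcol (bigD1 p) //= mxE eqxx mul1r big1 ?addr0 // => i /negPf ip.
by rewrite mxE ip mul0r.
Qed.

Definition Koszul := forall z : 'cV[A]_r, a *m z = 0 ->
  exists e : 'I_r -> 'I_r -> A, forall i, z i 0 = \sum_q (e i q - e q i) * a 0 q.

Lemma kos_pair (X : 'M[A]_r) c p q :
  ideal_span (fun y => exists j, y = (a *m X) 0 j)
    (a 0 q * cofactor X p c - a 0 p * cofactor X q c).
Proof.
set Y := setcol X c (ev p).
have := identC Y (ev q).
rewrite det_setcol_ev (bigD1 c) //= setcolK det_setcol_ev.
have -> : (a *m ev q) 0 0 = a 0 q.
  rewrite mxE (bigD1 q) //= mxE eqxx mulr1 big1 ?addr0 // => i /negPf iq.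
  by rewrite mxE iq mulr0.
have -> : (a *m Y) 0 c = a 0 p.
  rewrite mxE (bigD1 p) //= !mxE !eqxx mulr1 big1 ?addr0 // => i /negPf iq.
  by rewrite !mxE eqxx iq mulr0.
move=> E; have -> : a 0 q * cofactor X p c - a 0 p * cofactor X q c =
   \sum_(j | j != c) (a *m Y) 0 j * \det (setcol Y j (ev q)).
  by rewrite E addrAC subrr add0r.
apply: id_sum; first exact: span_ideal.
move=> j jc; apply: idMr; first exact: span_ideal.
apply: span_gen; exists j; rewrite !mxE; apply: eq_bigr => i _.
by rewrite !mxE (negPf jc).
Qed.

Lemma kos_det (X : 'M[A]_r) c : Koszul -> a *m col c X = 0 ->
  ideal_span (fun y => exists j, y = (a *m X) 0 j) (\det X).
Proof.
move=> K /K [e He].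
rewrite (expand_det_col _ c).
have -> : \sum_i X i c * cofactor X i c =
  \sum_i \sum_q e i q * (a 0 q * cofactor X i c - a 0 i * cofactor X q c).
  transitivity (\sum_i \sum_q ((e i q - e q i) * a 0 q) * cofactor X i c).
    by apply: eq_bigr => i _; rewrite -mulr_suml -He mxE.
  under eq_bigr do under eq_bigr do rewrite mulrBl mulrBl.
  under [RHS]eq_bigr do under eq_bigr do rewrite mulrBr.
  under eq_bigr do rewrite sumrB.
  under [RHS]eq_bigr do rewrite sumrB.
  rewrite !sumrB; congr (_ - _).
    apply: eq_bigr => i _. apply: eq_bigr => q _. by rewrite -mulrA.
  rewrite exchange_big /=. apply: eq_bigr => i _. apply: eq_bigr => q _.
  by rewrite -mulrA.
apply: id_sum; first exact: span_ideal.
move=> i _; apply: id_sum; first exact: span_ideal.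
move=> q _; apply: idM; first exact: span_ideal.
exact: kos_pair.
Qed.

Definition interp (X Y : 'M[A]_r) (k : nat) : 'M[A]_r :=
  \matrix_(i, j) if (j < k)%N then X i j else Y i j.

Lemma kos_star (X Y : 'M[A]_r) : Koszul -> a *m X = a *m Y ->
  ideal_span (fun y => exists j, y = (a *m Y) 0 j) (\det X - \det Y).
Proof.
move=> K EXY.
have colE (k : nat) j : (a *m interp X Y k) 0 j = (a *m Y) 0 j.
  case: (ltnP j k) => jk.
    transitivity ((a *m X) 0 j); last by rewrite EXY.
    by rewrite !mxE; apply: eq_bigr => i _; rewrite mxE jk.
  by rewrite !mxE; apply: eq_bigr => i _; rewrite mxE ltnNge jk.
suff H k : (k <= r)%N -> ideal_span (fun y => exists j, y = (a *m Y) 0 j)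
             (\det (interp X Y k) - \det Y).
  have := H r (leqnn r).
  by have -> : interp X Y r = X by apply/matrixP => i j; rewrite mxE ltn_ord.
elim: k => [_|k IH kr].
  have -> : interp X Y 0 = Y by apply/matrixP => i j; rewrite mxE.
  by rewrite subrr; apply: id0; apply: span_ideal.
have -> : \det (interp X Y k.+1) - \det Y =
  (\det (interp X Y k.+1) - \det (interp X Y k)) +
  (\det (interp X Y k) - \det Y) by rewrite addrA subrK.
apply: idD; [exact: span_ideal| |exact: IH (ltnW kr)].
set c : 'I_r := Ordinal kr.
set D := setcol (interp X Y k) c (col c X - col c Y).
have -> : \det (interp X Y k.+1) - \det (interp X Y k) = \det D.
  have -> : interp X Y k.+1 = setcol (interp X Y k) c (col c X).
    apply/matrixP => i j; rewrite !mxE ltnS leq_eqVlt -val_eqE /=.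
    case E: (val j == k) => //=.
    by rewrite (_ : j = c) //; apply/val_inj/eqP.
  have {2}-> : interp X Y k = setcol (interp X Y k) c (col c Y).
    apply/matrixP => i j; rewrite !mxE -val_eqE /=.
    case E: (val j == k) => //=.
    by rewrite (_ : j = c) ?ltnn //; apply/val_inj/eqP.
  rewrite !det_setcol -sumrB; apply: eq_bigr => i _.
  by rewrite !mxE mulrBl.
have Dc : (a *m D) 0 c = 0.
  rewrite mxE; under eq_bigr do rewrite !mxE eqxx.
  under eq_bigr do rewrite mulrBr.
  rewrite sumrB.
  have -> : \sum_i a 0 i * X i c = (a *m X) 0 c by rewrite mxE.
  have -> : \sum_i a 0 i * Y i c = (a *m Y) 0 c by rewrite mxE.
  by rewrite EXY subrr.
apply: (span_min (G := fun y => exists j, y = (a *m D) 0 j) (span_ideal _)).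
  move=> y [j ->].
  case: (eqVneq j c) => [->|jc].
    by rewrite Dc; apply: id0; apply: span_ideal.
  apply: span_gen; exists j.
  rewrite -(colE k) !mxE; apply: eq_bigr => i _; by rewrite !mxE (negPf jc).
apply: (@kos_det D c K).
apply/matrixP => i j; rewrite (ord1 i) (ord1 j).
transitivity ((a *m D) 0 c); last by rewrite Dc mxE.
by rewrite !mxE; apply: eq_bigr => i0 _; rewrite !mxE.
Qed.

End Det.


Section CB.
Variable A : comNzRingType.

Lemma det_mul_rect n k (P : 'M[A]_(n, k)) (Q : 'M[A]_(k, n)) :
  \det (P *m Q) =
  \sum_(f : {ffun 'I_n -> 'I_k}) \det (rowsub f Q) * \prod_i P i (f i).
Proof.
pose F := {ffun 'I_n -> 'I_k}.
transitivity (\sum_(f : F) \sum_(s : 'S_n) (-1) ^+ s *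
                 \prod_i (P i (f i) * Q (f i) (s i))).
  rewrite exchange_big; apply: eq_bigr => /= s _; rewrite -big_distrr /=.
  congr (_ * _); rewrite -(bigA_distr_bigA (fun i j => P i j * Q j (s i))) /=.
  by apply: eq_bigr => x _; rewrite mxE.
apply: eq_bigr => f _.
rewrite big_distrl /=; apply: eq_bigr => s _.
rewrite big_split /= -mulrA; congr (_ * _); rewrite mulrC; congr (_ * _).
by apply: eq_bigr => i _; rewrite mxE.
Qed.

Lemma minors_any r k (B : 'M[A]_(r, k)) (f : 'I_r -> 'I_k) :
  minors_ideal B (\det (colsub f B)).
Proof.
case: (boolP (injectiveb f)) => [/injectiveP finj | /injectivePn [i1 [i2 Di Ef]]];
  last first.
  rewrite -det_tr (determinant_alternate Di); first by apply: id0; apply: span_ideal.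
  by move=> j; rewrite !mxE Ef.
pose s0 := [seq f i | i <- enum 'I_r].
pose le := fun x y : 'I_k => (x <= y)%N.
pose ls := sort le s0.
have Us0 : uniq s0 by rewrite map_inj_uniq ?enum_uniq.
have Uls : uniq ls by rewrite sort_uniq.
have Sls : size ls = r by rewrite size_sort size_map size_enum_ord.
have Mls i : f i \in ls by rewrite mem_sort; apply: map_f; rewrite mem_enum.
have Sorted : sorted ltn (map val ls).
  rewrite ltn_sorted_uniq_leq map_inj_uniq ?Uls //=; last exact: val_inj.
  rewrite sorted_map; apply: sort_sorted => x y; exact: leq_total.
pose g : 'I_r -> 'I_k := fun i => nth (f i) ls i.
have g_incr : forall i j : 'I_r, (i < j)%N -> (g i < g j)%N.
  move=> i j ij.
  have := sorted_ltn_nth ltn_trans 0%N Sorted.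
  move=> /(_ i j); rewrite !inE size_map Sls !ltn_ord => /(_ isT isT ij).
  rewrite /g (nth_map (f i)) ?Sls // (nth_map (f j)) ?Sls //.
have sig_lt i : (index (f i) ls < r)%N by rewrite -Sls index_mem.
pose sig := fun i => Ordinal (sig_lt i).
have fE i : f i = g (sig i).
  by rewrite /g /= (set_nth_default (f i)) ?nth_index ?Sls ?sig_lt.
have sig_inj : injective sig.
  move=> i j /(congr1 g); rewrite -!fE; exact: finj.
pose p := perm sig_inj.
have -> : colsub f B = colsub g B *m perm_mx p^-1.
  rewrite -col_permE col_permEsub -colsub_comp.
  by apply/matrixP => i j; rewrite !mxE /= permE fE.
rewrite det_mulmx mulrC; apply: idM; first exact: span_ideal.
apply: span_gen; exists g; split => //.
Qed.

Lemma minors_mul r k (B : 'M[A]_(r, k)) (D : 'M[A]_(k, r)) :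
  minors_ideal B (\det (B *m D)).
Proof.
rewrite -det_tr trmx_mul det_mul_rect.
apply: id_sum; first exact: span_ideal.
move=> f _; apply: idMr; first exact: span_ideal.
have -> : rowsub f B^T = (colsub f B)^T by apply/matrixP => i j; rewrite !mxE.
rewrite det_tr; exact: minors_any.
Qed.

End CB.


Definition nspan (A : comNzRingType) (g : nat -> A) (n : nat) : A -> Prop :=
  ideal_span (fun y => exists2 j, (j < n)%N & y = g j).

Definition reg_nat (A : comNzRingType) (g : nat -> A) (n : nat) :=
  forall i, (i < n)%N -> forall x, nspan g i (g i * x) -> nspan g i x.

Lemma koszul_nat (A : comNzRingType) (g : nat -> A) n : reg_nat g n ->
  forall z : nat -> A, \sum_(i < n) g i * z i = 0 ->
  exists e : nat -> nat -> A, forall i, (i < n)%N ->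
     z i = \sum_(q < n) (e i q - e q i) * g q.
Proof.
elim: n => [|n IH] Hreg z Hz.
  by exists (fun _ _ => 0) => i.
have Hreg' : reg_nat g n by move=> i ilt; apply: Hreg; apply: ltnW.
move: Hz; rewrite big_ord_recr /= => Hz.
have : nspan g n (g n * z n).
  apply/span_nat; exists (fun j => - z j).
  apply: (@addrI _ (\sum_(i < n) g i * z i)).
  rewrite Hz -big_split big1 // => i _ /=.
  by rewrite mulNr mulrC subrr.
move=> /(Hreg n (ltnSn n)) /span_nat [c Hc].
pose z' := fun i => z i + c i * g n.
have Hz' : \sum_(i < n) g i * z' i = 0.
  rewrite /z'; under eq_bigr do rewrite mulrDr.
  rewrite big_split /=.
  rewrite (eq_bigr (fun i : 'I_n => g n * (c i * g i)) (P := predT)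
     (F1 := fun i : 'I_n => g i * (c i * g n))); last first.
    by move=> i _; ring.
  by rewrite -mulr_sumr -Hc.
have [e' He'] := IH Hreg' z' Hz'.
exists (fun i q => if q == n then (if (i < n)%N then - c i else 0)
                 else if i == n then 0 else e' i q).
move=> i; rewrite ltnS leq_eqVlt => /orP [/eqP -> | iltn].
  rewrite big_ord_recr /= eqxx subrr mul0r addr0 Hc.
  apply: eq_bigr => q _; rewrite (ltn_eqF (ltn_ord q)) ltn_ord.
  by rewrite sub0r opprK.
rewrite big_ord_recr /= eqxx iltn (ltn_eqF iltn).
rewrite (eq_bigr (fun q : 'I_n => (e' i q - e' q i) * g q)); last first.
  by move=> q _; rewrite (ltn_eqF (ltn_ord q)) ?(ltn_eqF iltn).
rewrite -He' // /z' subr0 mulNr addrK //.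
Qed.

Definition onat (A : comNzRingType) r (f : 'I_r -> A) (j : nat) : A :=
  odflt 0 (omap f (insub j)).

Lemma onatE (A : comNzRingType) r (f : 'I_r -> A) (i : 'I_r) : onat f i = f i.
Proof. by rewrite /onat valK. Qed.

Lemma koszul_row (A : comNzRingType) r (a : 'rV[A]_r) :
  reg_nat (onat (a 0)) r -> Koszul a.
Proof.
move=> Hreg z Hz.
have [|e He] := koszul_nat Hreg (z := onat (fun i => z i 0)).
  transitivity ((a *m z) 0 0); last by rewrite Hz mxE.
  by rewrite mxE; apply: eq_bigr => i _; rewrite !onatE.
exists (fun i q : 'I_r => e i q) => i.
rewrite -(onatE (fun i => z i 0)) He //; apply: eq_bigr => q _.
by rewrite onatE.
Qed.


Lemma span_ext (A : comNzRingType) (G H : A -> Prop) :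
  (forall y, G y <-> H y) -> forall x, ideal_span G x <-> ideal_span H x.
Proof. by move=> GH x; split; apply: span_mono => y /GH. Qed.

Lemma reg_nat_ext (A : comNzRingType) (g h : nat -> A) k :
  (forall j, g j = h j) -> reg_nat g k -> reg_nat h k.
Proof.
move=> gh Hg i ik x.
have E i0 y : nspan g i0 y <-> nspan h i0 y.
  by apply: span_ext => z; split => -[j jl ->]; exists j; rewrite ?gh.
by rewrite -gh => /E /(Hg i ik) /E.
Qed.

Section Transfer.
Variables (R : comNzRingType) (nv : nat).
Local Notation S := {mpoly R[nv]}.

Lemma nspanC (g : nat -> R) k (x : S) :
  nspan (fun j => (g j)%:MP : S) k x -> forall mm, nspan g k (x@_mm).
Proof.
move=> /span_nat [c ->] mm; apply/span_nat.
exists (fun j => (c j)@_mm).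
rewrite raddf_sum /=; apply: eq_bigr => j _.
by rewrite mulrC mcoeffCM mulrC.
Qed.

Lemma nspanC' (g : nat -> R) k (x : S) :
  (forall mm, nspan g k (x@_mm)) -> nspan (fun j => (g j)%:MP : S) k x.
Proof.
move=> H; rewrite [x]mpolyE; apply: id_sum; first exact: span_ideal.
move=> mm _; rewrite -mul_mpolyC; apply: idMr; first exact: span_ideal.
have /span_nat [c ->] := H mm.
apply/span_nat; exists (fun j => (c j)%:MP).
rewrite rmorph_sum /=; apply: eq_bigr => j _; by rewrite rmorphM.
Qed.

Lemma reg_transfer (g : nat -> R) k :
  reg_nat g k -> reg_nat (fun j => (g j)%:MP : S) k.
Proof.
move=> Hg i ik x Hx; apply: nspanC' => mm.
apply: (Hg i ik); rewrite -mcoeffCM; exact: nspanC Hx mm.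
Qed.

End Transfer.

Lemma regular_nat (A : comNzRingType) r (a : 'rV[A]_r) :
  regular_seq a -> reg_nat (onat (a 0)) r.
Proof.
move=> [_ Hr] i ir x.
have E y : nspan (onat (a 0)) i y <->
  ideal_span (fun y => exists2 j : 'I_r, (j < Ordinal ir)%N & y = a 0 j) y.
  apply: span_ext => z; split.
    move=> [j ji ->]; have jr : (j < r)%N by apply: ltn_trans ir.
    by exists (Ordinal jr) => //; rewrite -(onatE (a 0)).
  by move=> [j ji ->]; exists j => //; rewrite onatE.
move=> /E; rewrite -[i]/(val (Ordinal ir)) onatE => /Hr /E.
by [].
Qed.

Lemma koszul_aS (R : comNzRingType) m r (a : 'rV[R]_r) :
  regular_seq a -> Koszul (aS m a).
Proof.
move=> /regular_nat /(reg_transfer (nv := m)) H; apply: koszul_row.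
apply: (reg_nat_ext _ H) => j.
rewrite /onat; case: insub => [i|] /=; last by rewrite mpolyC0.
by rewrite mxE.
Qed.


Lemma add_nf (A : comNzRingType) (I J : A -> Prop) : is_ideal I -> is_ideal J ->
  forall x, ideal_add I J x -> exists y z, [/\ I y, J z & x = y + z].
Proof.
move=> iI iJ; apply: (span_min (I := fun x => exists y z, [/\ I y, J z & x = y + z])).
- split.
  + by exists 0, 0; split; rewrite ?addr0 //; apply: id0.
  + move=> x1 x2 [y1 [z1 [? ? ->]]] [y2 [z2 [? ? ->]]].
    exists (y1 + y2), (z1 + z2); split; [by apply: idD|by apply: idD|].
    by rewrite addrACA.
  + move=> c x1 [y1 [z1 [? ? ->]]]; exists (c * y1), (c * z1).
    by split; [apply: idM|apply: idM|rewrite mulrDr].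
- move=> x [Ix|Jx].
  + by exists x, 0; split; rewrite ?addr0 //; apply: id0.
  + by exists 0, x; split; rewrite ?add0r //; apply: id0.
Qed.

Lemma minors_ideal_is (A : comNzRingType) r k (B : 'M[A]_(r, k)) :
  is_ideal (minors_ideal B).
Proof. exact: span_ideal. Qed.

Section Key.
Variable A : comNzRingType.
Variable r : nat.
Variable a : 'rV[A]_r.

Lemma key_lemma k k' (B : 'M[A]_(r, k)) (B' : 'M[A]_(r, k')) :
  Koszul a ->
  (forall j, row_ideal a B ((a *m B') 0 j)) ->
  forall x, minors_ideal B' x -> ideal_add (minors_ideal B) (row_ideal a B) x.
Proof.
move=> K HB.
have Hc j : exists c : 'I_k -> A, (a *m B') 0 j = \sum_l c l * (a *m B) 0 l.
  by apply/(span_ord (fun l => (a *m B) 0 l))/entries_row/HB.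
pose c := fun j => proj1_sig (constructive_indefinite_description _ (Hc j)).
have cE j : (a *m B') 0 j = \sum_l c j l * (a *m B) 0 l.
  exact: (proj2_sig (constructive_indefinite_description _ (Hc j))).
pose D : 'M[A]_(k, k') := \matrix_(l, j) c j l.
have aBD : a *m B' = a *m B *m D.
  apply/matrixP => i j; rewrite (ord1 i) cE [RHS]mxE.
  by apply: eq_bigr => l _; rewrite [D _ _]mxE mulrC.
apply: span_min; first exact: add_ideal.
move=> y [f [_ ->]].
set X := colsub f B'; set Y := B *m colsub f D.
have aXY : a *m X = a *m Y.
  apply/matrixP => i j.
  have -> : (a *m X) i j = (a *m B') i (f j) by rewrite !mxE; apply: eq_bigr => l _; rewrite mxE.
  rewrite aBD mulmxA !mxE; apply: eq_bigr => l _; by rewrite !mxE.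
have H1 := kos_star K aXY.
have -> : \det X = (\det X - \det Y) + \det Y by rewrite subrK.
apply: idD; first exact: add_ideal.
- apply: (span_min (add_ideal _ _) _ H1) => z [j ->].
  apply: iaddr; rewrite mulmxA.
  apply/entries_row/span_ord; exists (fun l => colsub f D l j).
  by rewrite mxE; apply: eq_bigr => l _; rewrite mulrC.
- by apply: iaddl; apply: minors_mul.
Qed.

End Key.


Section Main.
Variables (R : comNzRingType) (m s r : nat).
Variables (phi : 'M[R]_(m, s)) (a : 'rV[R]_r).
Local Notation S := {mpoly R[m]}.
Local Notation aSS := (aS m a).
Local Notation L := (Lideal phi).
Local Notation Lr B := (row_ideal aSS B).
Local Notation aI := (@aIdealS R m r a).

Lemma Lr_sub_a k (B : 'M[S]_(r, k)) x : Lr B x -> aI x.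
Proof.
apply: span_min; first exact: span_ideal.
move=> y [i [j ->]]; rewrite mxE; apply: id_sum; first exact: span_ideal.
move=> l _; apply: idMr; first exact: span_ideal.
by apply: span_gen; exists l; rewrite (ord1 i).
Qed.

Lemma Mr_row k l (B : 'M[S]_(r, k)) (C : 'M[S]_(r, l)) x :
  minors_ideal B x -> minors_ideal (row_mx B C) x.
Proof.
apply: span_mono => y [f [finc ->]].
exists (fun i => lshift l (f i)); split => //.
by congr (\det _); apply/matrixP => i j; rewrite [LHS]mxE [RHS]mxE row_mxEl.
Qed.

Lemma Lr_row k l (B : 'M[S]_(r, k)) (C : 'M[S]_(r, l)) x :
  Lr (row_mx B C) x <-> ideal_add (Lr B) (entries_ideal (aSS *m C)) x.
Proof.
rewrite /row_ideal mul_mx_row; split.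
- apply: span_min; first exact: add_ideal.
  move=> y [i [j ->]]; case: (splitP j) => j' ej.
  + rewrite (_ : j = lshift l j'); last exact: val_inj.
    by rewrite row_mxEl; apply: iaddl; apply: span_gen; exists i, j'.
  + rewrite (_ : j = rshift k j'); last exact: val_inj.
    by rewrite row_mxEr; apply: iaddr; apply: span_gen; exists i, j'.
- apply: span_min; first exact: span_ideal.
  move=> y [] Hy.
  + apply: (span_min (span_ideal _) _ Hy) => z [i [j ->]].
    by apply: span_gen; exists i, (lshift l j); rewrite row_mxEl.
  + apply: (span_min (span_ideal _) _ Hy) => z [i [j ->]].
    by apply: span_gen; exists i, (rshift k j); rewrite row_mxEr.
Qed.

Lemma ijd_pos n k (B : 'M[S]_(r, k)) : iterated_jdual phi a n B -> (0 < n)%N.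
Proof. by case. Qed.

Lemma ijd_I2 n k (B : 'M[S]_(r, k)) : iterated_jdual phi a n B ->
  (forall x, L x -> Lr B x) /\
  (forall x, Lr B x -> ideal_add L (minors_ideal B) x).
Proof.
elim => {n k B} [B _ EB | n k l B u C HB [IH1 IH2] _ _ Heq _ Eu].
  have E x : Lr B x <-> L x by rewrite /row_ideal /Lideal EB.
  by split => x; [move/E | move/E/iaddl].
split.
  by move=> x /IH1 Hx; apply/Lr_row/iaddl.
move=> x /Lr_row; rewrite -Eu => /Heq.
apply: span_min; first exact: add_ideal.
move=> y [/IH2|[Hy _]].
- apply: span_min; first exact: add_ideal.
  move=> z [Lz|Mz]; first exact: iaddl.
  by apply: iaddr; apply: Mr_row.
- by apply: iaddr; apply: Mr_row.
Qed.

Hypothesis Kos : Koszul aSS.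

Lemma ijd_I1 n k (B : 'M[S]_(r, k)) : iterated_jdual phi a n B ->
  forall n' k' (B' : 'M[S]_(r, k')), iterated_jdual phi a n' B' -> n = n' ->
  forall x, Lr B x -> Lr B' x.
Proof.
elim => {n k B} [B _ EB | n k l B u C HB IH _ _ Heq _ Eu].
  move=> n' k' B' [B'0 _ EB' _ | n0 k0 l0 B0 u0 C0 HB0 _ _ _ _ _ /esym E1]; last first.
    by move: (ijd_pos HB0); rewrite (succn_inj E1).
  by move=> x; rewrite /row_ideal -EB -EB'.
move=> n' k' B' [B'0 _ EB' E1 | n0 k0 l0 B0 u0 C0 HB0 _ _ Heq0 _ Eu0 /succn_inj E1].
  by move: (ijd_pos HB); rewrite (succn_inj E1).
subst n0.
have IH0 := IH _ _ _ HB0 erefl.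
move=> x /Lr_row; rewrite -Eu => /Heq Hx.
apply/Lr_row; rewrite -Eu0; apply/Heq0.
apply: (span_min (add_ideal _ _) _ Hx) => y [/IH0 Hy|[My aIy]].
  exact: iaddl.
have Hk : ideal_add (minors_ideal B0) (Lr B0) y.
  apply: (key_lemma Kos (B := B0) (B' := B) _ My) => j.
  by apply: IH0; apply: span_gen; exists 0, j.
have [p [q [Mp Lq Epq]]] := add_nf (span_ideal _) (span_ideal _) Hk.
rewrite Epq.
apply: idD; [exact: add_ideal| |exact: iaddl].
apply: iaddr; split => //.
have -> : p = y - q by rewrite Epq addrK.
apply: idB; [exact: span_ideal|exact: aIy|exact: Lr_sub_a Lq].
Qed.

Lemma final n k k' (B : 'M[S]_(r, k)) (B' : 'M[S]_(r, k')) :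
  iterated_jdual phi a n B -> iterated_jdual phi a n B' ->
  forall x, ideal_add L (minors_ideal B) x -> ideal_add L (minors_ideal B') x.
Proof.
move=> HB HB'; apply: span_min; first exact: add_ideal.
move=> y [Ly|My]; first exact: iaddl.
have Hk : ideal_add (minors_ideal B') (Lr B') y.
  apply: (key_lemma Kos (B := B') (B' := B) _ My) => j.
  by apply: (ijd_I1 HB HB' erefl); apply: span_gen; exists 0, j.
apply: (span_min (add_ideal _ _) _ Hk) => z [Mz|Lz]; first exact: iaddr.
exact: (proj2 (ijd_I2 HB')).
Qed.

End Main.

Theorem theorem4p5 (R : comNzRingType) (m s r : nat)
  (phi : 'M[R]_(m, s)) (a : 'rV[R]_r) :
  noetherian R ->
  (forall i j, ideal_span (fun x => exists j, x = a 0 j) (phi i j)) ->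
  regular_seq a ->
  forall (i k k' : nat) (B : 'M[{mpoly R[m]}]_(r, k)) (B' : 'M[{mpoly R[m]}]_(r, k')),
    (1 <= i)%N ->
    iterated_jdual phi a i B ->
    iterated_jdual phi a i B' ->
    ideal_eq (ideal_add (Lideal phi) (minors_ideal B))
             (ideal_add (Lideal phi) (minors_ideal B')).
Proof.
move=> _ _ Hreg i k k' B B' _ HB HB' x.
have K := koszul_aS (m := m) Hreg.
split; [exact: (final K HB HB') | exact: (final K HB' HB)].
Qed.
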